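(* Let $\Gamma\subset U_+$ be a non-commutative, torsion-free complex Kleinian group and let $\Gamma_p$ be the subgroup of $\Gamma$ generated by all parabolic elements of $\Gamma$. Suppose $\Gamma_p$ is conjugate in $\mathrm{PSL}(3,\mathbb{C})$ to a group $$\Gamma^\ast_W=\{g_{x,y} : (x,y)\in W\},\qquad g_{x,y}=\begin{bmatrix}1&x&y\\0&1&0\\0&0&1\end{bmatrix},$$ for some discrete additive subgroup $W\subset\mathbb{C}^2$ with $\mathrm{rank}(W)\le 2$. Then $\Gamma_p$ is conjugate to one of the following groups: (i) $\Gamma_1=\langle g_{1,0},g_{0,1}\rangle$; (ii) $\Gamma_2=\langle g_{0,1},g_{0,y}\rangle$ with $y\notin\mathbb{R}$; (iii) $\Gamma_3=\langle g_{1,0},g_{x,0}\rangle$ with $x\notin\mathbb{R}$; (iv) $\Gamma_4=\langle g_{1,0}\rangle$; (v) $\Gamma_5=\langle g_{0,1}\rangle$.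
   Context: $U_+\subset\mathrm{PSL}(3,\mathbb{C})$ is the subgroup of elements admitting an upper triangular lift in $\mathrm{SL}(3,\mathbb{C})$. A complex Kleinian group is a discrete subgroup of $\mathrm{PSL}(3,\mathbb{C})$ acting properly discontinuously on some nonempty open invariant subset of $\mathbb{CP}^2$. An element of $\mathrm{PSL}(3,\mathbb{C})$ is parabolic if it has a non-diagonalizable lift in $\mathrm{SL}(3,\mathbb{C})$ all of whose eigenvalues have modulus $1$. Torsion-free means the only element of finite order is the identity. *)

(* Defs.v *)
From HB Require Import structures.
From mathcomp Require Import all_boot all_order all_algebra.
From mathcomp Require Import all_classical all_reals all_analysis.
From mathcomp Require Import complex.
Set Implicit Arguments.
Unset Strict Implicit.
Unset Printing Implicit Defensive.
Import Order.TTheory GRing.Theory Num.Theory.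
Import numFieldTopology.Exports numFieldNormedType.Exports.
Local Open Scope ring_scope.
Local Open Scope classical_set_scope.

(* The usual (modulus) metric topology on C = R[i], as for any numFieldType. *)
HB.instance Definition _ (R : realType) := PseudoPointedMetric.copy R[i] (R[i])^o.

Section PSL3.
Variable R : realType.
Local Notation C := R[i].
Local Notation M3 := 'M[C]_3.
Local Notation V3 := 'cV[C]_3.

(* An element of PSL(3,C) = PGL(3,C) is represented by any of its invertible
   lifts; a subgroup of PSL(3,C) is represented by its full preimage in GL(3,C),
   i.e. a set of invertible matrices closed under nonzero scalars, products,
   inverses and containing 1. *)
Definition psubgroup (G : set M3) : Prop :=
  [/\ (forall A, G A -> A \in unitmx),
      (forall A c, G A -> c != 0 -> G (c *: A)),
      G 1%:M,
      (forall A B, G A -> G B -> G (A *m B)) &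
      (forall A, G A -> G (invmx A))].

Definition peq (A B : M3) : Prop := exists2 c : C, c != 0 & A = c *: B.

Definition sl_lifts (G : set M3) : set M3 := [set A | G A /\ \det A = 1].

(* G is a discrete subgroup of PSL(3,C): the preimage in SL(3,C) (a 3-fold
   covering) is a discrete subset of M_3(C). *)
Definition pdiscrete (G : set M3) : Prop :=
  forall A, sl_lifts G A -> \forall B \near A, sl_lifts G B -> B = A.

(* Subsets of CP^2 are represented by their cones in C^3 \ {0}. *)
Definition cone (S : set V3) : Prop :=
  ~ S 0 /\ forall v c, S v -> c != 0 -> S (c *: v).

Definition unit_sphere : set V3 := [set v | \sum_i `|v i 0| ^+ 2 = 1].

(* a cone S is compact in CP^2 iff its intersection with the unit sphere is compact *)
Definition pcompact (S : set V3) : Prop := cone S /\ compact (S `&` unit_sphere).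

Definition prop_discont (G : set M3) (Omega : set V3) : Prop :=
  forall K, pcompact K -> K `<=` Omega ->
    finite_set [set A | sl_lifts G A /\ exists2 v, K v & K (A *m v)].

Definition complex_kleinian (G : set M3) : Prop :=
  [/\ psubgroup G, pdiscrete G &
      exists Omega : set V3,
        [/\ cone Omega, open Omega, Omega !=set0,
            (forall A v, G A -> Omega v -> Omega (A *m v)) &
            prop_discont G Omega]].

Definition in_Uplus (G : set M3) : Prop :=
  forall A, G A -> exists c : C,
    \det (c *: A) = 1 /\ forall i j : 'I_3, (j < i)%N -> (c *: A) i j = 0.

Definition noncommutative (G : set M3) : Prop :=
  exists A B, [/\ G A, G B & ~ peq (A *m B) (B *m A)].

Definition torsion_free (G : set M3) : Prop :=
  forall A n, G A -> (0 < n)%N -> peq (A ^+ n) 1%:M -> peq A 1%:M.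

Definition parabolic (A : M3) : Prop :=
  exists c : C, [/\ \det (c *: A) = 1, ~ diagonalizable (c *: A) &
                    forall a : C, eigenvalue (c *: A) a -> `|a| = 1].

Definition pgen (S : set M3) : set M3 :=
  fun A => forall H, psubgroup H -> S `<=` H -> H A.

Definition parabolic_subgroup (G : set M3) : set M3 :=
  pgen [set A | G A /\ parabolic A].

Definition pconj (G H : set M3) : Prop :=
  exists2 P : M3, P \in unitmx & forall A, G A <-> H (P *m A *m invmx P).

Definition gxy (x y : C) : M3 :=
  1%:M + x *: delta_mx (0 : 'I_3) (1 : 'I_3) + y *: delta_mx (0 : 'I_3) (2 : 'I_3).

Definition discrete_subgroup_rank_le2 (W : set (C * C)) : Prop :=
  [/\ W (0, 0),
      (forall u v, W u -> W v -> W (u.1 - v.1, u.2 - v.2)),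
      (forall w, W w -> \forall u \near w, W u -> u = w) &
      (forall u v w, W u -> W v -> W w ->
         exists n1 n2 n3 : int, (n1, n2, n3) != (0, 0, 0) /\
           (u.1 *~ n1 + v.1 *~ n2 + w.1 *~ n3 = 0 /\
            u.2 *~ n1 + v.2 *~ n2 + w.2 *~ n3 = 0))].

Definition GammaW (W : set (C * C)) : set M3 :=
  fun A => exists x y c, [/\ W (x, y), c != 0 & A = c *: gxy x y].

Definition Gamma1 : set M3 := pgen [set A | A = gxy 1 0 \/ A = gxy 0 1].
Definition Gamma2 (y : C) : set M3 := pgen [set A | A = gxy 0 1 \/ A = gxy 0 y].
Definition Gamma3 (x : C) : set M3 := pgen [set A | A = gxy 1 0 \/ A = gxy x 0].
Definition Gamma4 : set M3 := pgen [set A | A = gxy 1 0].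
Definition Gamma5 : set M3 := pgen [set A | A = gxy 0 1].

End PSL3.

(* Main.v *)
Require Import Defs.
From HB Require Import structures.
From mathcomp Require Import all_boot all_order all_algebra.
From mathcomp Require Import all_classical all_reals all_analysis.
From mathcomp Require Import complex.
From mathcomp Require Import ring lra.
Import Order.TTheory GRing.Theory Num.Theory.
Import numFieldTopology.Exports numFieldNormedType.Exports.
Local Open Scope ring_scope.
Local Open Scope classical_set_scope.
Local Open Scope complex_scope.
Section OneD.
Variable R : realType.

Lemma grp_int (S : set R) (s : R) : S 0 -> (forall a b, S a -> S b -> S (a - b)) ->
  S s -> forall n : int, S (n%:~R * s).
Proof.
move=> S0 Ssub Ss.
have Sneg : forall a, S a -> S (- a) by move=> a Sa; rewrite -sub0r; exact: Ssub.
have Sadd : forall a b, S a -> S b -> S (a + b).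
  by move=> a b Sa Sb; rewrite -(opprK b); apply: Ssub => //; exact: Sneg.
have Snat : forall k : nat, S (k%:R * s).
  elim=> [|k IH]; first by rewrite mul0r.
  by rewrite -addn1 natrD mulrDl mul1r; exact: Sadd.
case=> k.
  exact: Snat.
by rewrite NegzE mulrNz mulNr; apply: Sneg; exact: Snat.
Qed.

Lemma cyc1 (S : set R) (d : R) : S 0 -> (forall a b, S a -> S b -> S (a - b)) ->
  0 < d -> (forall s, S s -> 0 < s -> d <= s) -> (exists s, S s /\ s != 0) ->
  exists2 s0, 0 < s0 & forall s, S s <-> exists n : int, s = n%:~R * s0.
Proof.
move=> S0 Ssub d0 Sd [s1 [Ss1 s1n0]].
pose A := [set s | S s /\ 0 < s].
have An : A !=set0.
  have [s1p|s1n] := ltP 0 s1.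
    by exists s1; split.
  exists (0 - s1); split; first exact: Ssub.
  by rewrite sub0r oppr_gt0 lt_neqAle s1n s1n0.
have Alb : lbound A 0 by hnf=> y [_ /ltW].
have hA : has_inf A by split => //; exists 0.
have dm : d <= inf A by apply: lb_le_inf => // y [Sy y0]; exact: Sd.
have [a [Sa a0] am] := inf_adherent d0 hA.
have ma : inf A <= a by apply: ge_inf => //; exists 0.
have aeq : a = inf A.
  apply/eqP; rewrite eq_le ma andbT; apply/negP => /negP; rewrite -ltNge => lt.
  have [b [Sb b0] ba] := inf_lt An lt.
  have mb : inf A <= b by apply: ge_inf => //; exists 0.
  have := Sd (a - b) (Ssub _ _ Sa Sb); rewrite subr_gt0 => /(_ ba).
  lra.
exists a => // s; split.
  move=> Ss; exists (Num.floor (s / a)).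
  have := floor_itv (s / a); set n := Num.floor (s / a) => /andP [h1 h2].
  have Sr : S (s - n%:~R * a).
    by apply: (Ssub _ _ Ss); exact: (@grp_int S a S0 Ssub Sa n).
  have h1' : n%:~R * a <= s by rewrite -ler_pdivlMr.
  have h2' : s < (n + 1)%:~R * a by rewrite -ltr_pdivrMr.
  rewrite intrD mulrDl mul1r in h2'.
  have [r0|] := ltP 0 (s - n%:~R * a).
    have : inf A <= s - n%:~R * a by apply: ge_inf => //; exists 0.
    lra.
  lra.
by move=> [n ->]; exact: (@grp_int S a S0 Ssub Sa n).
Qed.
End OneD.

Lemma nat_pigeon (N : nat) (h : nat -> nat) : (forall k, h k < N)%N ->
  exists i j, [/\ (i < j)%N, (j <= N)%N & h i = h j].
Proof.
move=> hN.
have : ~~ uniq (map h (iota 0 N.+1)).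
  apply/negP => U.
  have sub : {subset map h (iota 0 N.+1) <= iota 0 N}.
    by move=> x /mapP [k _ ->]; rewrite mem_iota add0n hN.
  by have := uniq_leq_size U sub; rewrite size_map !size_iota ltnn.
move/(uniqPn 0%N) => [i [j [ij]]]; rewrite size_map size_iota => jN.
rewrite !(nth_map 0%N) ?size_iota ?(ltn_trans ij) // !nth_iota ?(ltn_trans ij) //.
by rewrite !add0n => e; exists i, j; split.
Qed.

Section Pig.
Variable R : realType.
Lemma pigeon (N : nat) (f : nat -> R) : (0 < N)%N -> (forall k, 0 <= f k < 1) ->
  exists i j, [/\ (i < j)%N, (j <= N)%N & `|f j - f i| < N%:R^-1].
Proof.
move=> N0 hf.
have Np : 0 < (N%:R : R) by rewrite ltr0n.
have pos k : 0 <= f k * N%:R by have /andP [] := hf k; move=> a _; apply: mulr_ge0 => //; exact: ltW.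
have hN : forall k, (Num.truncn (f k * N%:R) < N)%N.
  by move=> k; rewrite truncn_lt_nat // -{2}[N%:R]mul1r ltr_pM2r //; have /andP [] := hf k.
have [i [j [ij jN e]]] := @nat_pigeon N (fun k => Num.truncn (f k * N%:R)) hN.
exists i, j; split => //.
  have := truncn_itv (pos i); have := truncn_itv (pos j); rewrite e.
  move=> /andP [a1 a2] /andP [b1 b2].
  rewrite ltr_norml -[N%:R^-1]mul1r ltrNl !ltr_pdivlMr // ?mulrBl ?mulNr ?mulrBl.
  by apply/andP; split; lra.
Qed.
End Pig.

Section Vec.
Variable R : realType.
Local Notation C := R[i].

Definition nr (z : C) : R := complex.Re `|z|.
Lemma normE z : `|z| = (nr z)%:C.
Proof. by rewrite /nr normc_def. Qed.
Lemma nr_ge0 z : 0 <= nr z.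
Proof. by rewrite -ler0c -normE. Qed.
Lemma nrD x y : nr (x + y) <= nr x + nr y.
Proof. by rewrite -lecR raddfD /= -!normE ler_normD. Qed.
Lemma nrM x y : nr (x * y) = nr x * nr y.
Proof. by apply: complexI; rewrite rmorphM /= -!normE normrM. Qed.
Lemma nrR t : nr t%:C = `|t|.
Proof. by rewrite /nr normc_def /= expr0n /= addr0 sqrtr_sqr. Qed.
Lemma nr_eq0 z : nr z = 0 -> z = 0.
Proof. by move=> h; apply/normr0_eq0; rewrite normE h. Qed.

Definition vl (a b : R) (u v : C * C) : C * C :=
  (a%:C * u.1 + b%:C * v.1, a%:C * u.2 + b%:C * v.2).
Definition nrm (u : C * C) := nr u.1 + nr u.2.

Lemma nrm_ge0 u : 0 <= nrm u.
Proof. by rewrite /nrm addr_ge0 // nr_ge0. Qed.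

Lemma nrm_vl a b u v : nrm (vl a b u v) <= `|a| * nrm u + `|b| * nrm v.
Proof.
rewrite /nrm /vl /=.
have h1 := nrD (a%:C * u.1) (b%:C * v.1).
have h2 := nrD (a%:C * u.2) (b%:C * v.2).
rewrite !nrM !nrR in h1 h2.
have := nr_ge0 u.1; have := nr_ge0 u.2; have := nr_ge0 v.1; have := nr_ge0 v.2.
nra.
Qed.

Lemma vl_comb a b a1 b1 a2 b2 u v :
  vl a b (vl a1 b1 u v) (vl a2 b2 u v) = vl (a * a1 + b * a2) (a * b1 + b * b2) u v.
Proof. by rewrite /vl /=; congr pair; rewrite !raddfD /= !rmorphM /=; ring. Qed.

Lemma vl_sub a b a' b' u v :
  ((vl a b u v).1 - (vl a' b' u v).1, (vl a b u v).2 - (vl a' b' u v).2) =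
  vl (a - a') (b - b') u v.
Proof. by rewrite /vl /=; congr pair; rewrite !raddfB /=; ring. Qed.

Lemma vl10 u v : vl 1 0 u v = u.
Proof. by case: u => x y; rewrite /vl /= !mul1r !mul0r !addr0. Qed.
Lemma vl01 u v : vl 0 1 u v = v.
Proof. by case: v => x y; rewrite /vl /= !mul1r !mul0r !add0r. Qed.
Lemma vl00 u v : vl 0 0 u v = (0, 0).
Proof. by rewrite /vl /= !mul0r !addr0. Qed.
Lemma vl_t0 t u v v' : vl t 0 u v = vl t 0 u v'.
Proof. by rewrite /vl /= !mul0r. Qed.

Definition indep (u v : C * C) := forall a b, vl a b u v = (0, 0) -> a = 0 /\ b = 0.

Lemma vl_inj u v a b a' b' : indep u v -> vl a b u v = vl a' b' u v -> a = a' /\ b = b'.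
Proof.
move=> I e; have := I (a - a') (b - b'); rewrite -vl_sub e.
by rewrite !subrr => /(_ erefl) [/eqP + /eqP]; rewrite !subr_eq0 => /eqP -> /eqP ->.
Qed.

Lemma nrm_pos u : u != (0, 0) -> 0 < nrm u.
Proof.
move=> un; rewrite lt_neqAle nrm_ge0 andbT; apply/eqP => h.
move: un; case: u h => x y; rewrite /nrm /= => h.
have hx := nr_ge0 x; have hy := nr_ge0 y.
have ex : nr x = 0 by lra.
have ey : nr y = 0 by lra.
by rewrite (nr_eq0 _ ex) (nr_eq0 _ ey) eqxx.
Qed.

Lemma vl_t0_eq0 t u : u != (0, 0) -> vl t 0 u u = (0, 0) -> t = 0.
Proof.
case: u => x y un; rewrite /vl /= !mul0r !addr0 => [[hx hy]].
apply: complexI => /=; apply/eqP; apply: contraNT un => tn.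
move: hx hy => /eqP; rewrite mulf_eq0 (negPf tn) /= => /eqP ->.
by move/eqP; rewrite mulf_eq0 (negPf tn) /= => /eqP ->.
Qed.
Definition Wgrp (W : set (C * C)) :=
  W (0, 0) /\ (forall u v, W u -> W v -> W (u.1 - v.1, u.2 - v.2)).

Lemma W_vl W u v (n m : int) : Wgrp W -> W u -> W v -> W (vl n%:~R m%:~R u v).
Proof.
move=> [W0 Wsub] Wu Wv.
have line x : W x -> forall k : int, W (vl k%:~R 0 x x).
  move=> Wx k; pose S := [set t : R | W (vl t 0 x x)].
  have S0 : S 0 by rewrite /S /= vl00.
  have Ssub : forall a b, S a -> S b -> S (a - b).
    by move=> a b Sa Sb; have := Wsub _ _ Sa Sb; rewrite vl_sub subr0.
  have S1 : S 1 by rewrite /S /= vl10.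
  by have := @grp_int R S 1 S0 Ssub S1 k; rewrite mulr1.
have := Wsub _ _ (line u Wu n) (line v Wv (- m)).
congr W; rewrite /vl /=; congr pair; rewrite !rmorphN /=; ring.
Qed.

Lemma W_sep W : discrete_subgroup_rank_le2 W ->
  exists2 e : R, 0 < e & forall u, W u -> nrm u < e -> u = (0, 0).
Proof.
move=> [W0 _ Wd _].
have /nbhs_ballP [eps eps0 He] := Wd _ W0.
have epsr : eps = (complex.Re eps)%:C.
  by rewrite RRe_real // gtr0_real.
have e0 : 0 < complex.Re eps by rewrite -ltcR -epsr.
exists (complex.Re eps) => // u Wu nu; apply: He => //.
have := nr_ge0 u.1; have := nr_ge0 u.2; rewrite /nrm in nu => h1 h2.
split => /=; rewrite /ball /= sub0r normrN normE epsr ltcR; lra.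
Qed.

Lemma line_lem W e v : Wgrp W -> 0 < e ->
  (forall u, W u -> nrm u < e -> u = (0, 0)) -> W v -> v != (0, 0) ->
  exists u, [/\ W u, u != (0, 0) & forall t, W (vl t 0 u u) <-> exists n : int, t = n%:~R].
Proof.
move=> [W0 Wsub] e0 sep Wv vn.
pose S := [set t : R | W (vl t 0 v v)].
have S0 : S 0 by rewrite /S /= vl00.
have Ssub : forall a b, S a -> S b -> S (a - b).
  by move=> a b Sa Sb; have := Wsub _ _ Sa Sb; rewrite vl_sub subr0.
have nv := nrm_pos _ vn.
have d0 : 0 < e / nrm v by rewrite divr_gt0.
have Sd : forall s, S s -> 0 < s -> e / nrm v <= s.
  move=> s Ss s0; rewrite leNgt; apply/negP => sd.
  have : nrm (vl s 0 v v) < e.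
    apply: (le_lt_trans (nrm_vl _ _ _ _)); rewrite normr0 mul0r addr0 gtr0_norm //.
    by rewrite -ltr_pdivlMr.
  move/(sep _ Ss)/(vl_t0_eq0 _ _ vn) => s00; lra.
have S1 : exists s, S s /\ s != 0 by exists 1; split; rewrite ?oner_eq0 // /S /= vl10.
have [s0 s0p Sc] := @cyc1 R S _ S0 Ssub d0 Sd S1.
have comb t : vl t 0 (vl s0 0 v v) (vl s0 0 v v) = vl (t * s0) 0 v v.
  by rewrite vl_comb !mulr0 !mul0r !addr0.
exists (vl s0 0 v v); split.
- by apply/(Sc s0); exists 1; rewrite mul1r.
- apply/negP => /eqP /(vl_t0_eq0 _ _ vn) h; lra.
move=> t; rewrite comb; split.
  move/(Sc (t * s0)) => [n h]; exists n.
  exact: (mulIf (negbT (gt_eqF s0p)) h).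
by move=> [n ->]; apply/(Sc (n%:~R * s0)); exists n.
Qed.

Lemma vl_combL a b a2 b2 u v : vl a b u (vl a2 b2 u v) = vl (a + b * a2) (b * b2) u v.
Proof. by rewrite -{1}(vl10 u v) vl_comb mulr1 mulr0 add0r. Qed.
Lemma vl_combR a b a1 b1 u v : vl a b (vl a1 b1 u v) u = vl (a * a1 + b) (a * b1) u v.
Proof. by rewrite -{2}(vl10 u v) vl_comb mulr1 mulr0 addr0. Qed.

Lemma solve1 (a b x y : C) : b != 0 -> a * x + b * y = 0 -> y = (- a / b) * x.
Proof.
move=> bn h; transitivity ((a * x + b * y - a * x) / b); first by field.
by rewrite h; field.
Qed.

Lemma solve2 (a b c x y z : C) : c != 0 -> a * x + b * y + c * z = 0 ->
  z = (- a / c) * x + (- b / c) * y.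
Proof.
move=> cn h; transitivity ((a * x + b * y + c * z - a * x - b * y) / c); first by field.
by rewrite h; field.
Qed.

Lemma RC_div (n m : int) : ((- n%:~R / m%:~R : R))%:C = - n%:~R / m%:~R :> C.
Proof. by rewrite rmorphM rmorphN fmorphV /= !rmorph_int. Qed.

Lemma RC_neq0 (t : R) : t != 0 -> t%:C != 0 :> C.
Proof. by apply: contraNneq => h; apply/eqP; case: h. Qed.

Lemma classify W : discrete_subgroup_rank_le2 W -> (exists2 v, W v & v != (0, 0)) ->
  (exists u, u != (0, 0) /\ forall z, W z <-> exists n : int, z = vl n%:~R 0 u u)
  \/ (exists u v, indep u v /\ forall z, W z <-> exists n m : int, z = vl n%:~R m%:~R u v).
Proof.
move=> D [v Wv vn].
have G : Wgrp W by case: D => W0 Wsub _ _; split.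
have [W0 Wsub] := G.
have [e e0 sep] := W_sep _ D.
have [u1 [Wu1 u1n Lu1]] := line_lem _ _ _ G e0 sep Wv vn.
case: (pselect (forall z, W z -> exists t, z = vl t 0 u1 u1)) => [allL|].
  left; exists u1; split => // z; split.
    move=> Wz; have [t ezt] := allL z Wz.
    by move: Wz; rewrite ezt => /Lu1 [n en]; exists n; rewrite en.
  by move=> [n ->]; apply/Lu1; exists n.
move=> /existsNP [w2 /not_implyP [Ww2 nL]].
have I12 : indep u1 w2.
  move=> a b h; case: (eqVneq b 0) => [b0|bn].
    by move: h; rewrite b0 (vl_t0 _ _ _ u1) => /(vl_t0_eq0 _ _ u1n) ->.
  exfalso; apply: nL; exists (- a / b).
  have bC := RC_neq0 _ bn.
  rewrite /vl in h *; case: h => h1 h2.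
  rewrite [w2]surjective_pairing; congr pair; rewrite rmorph0 mul0r addr0 rmorphM rmorphN fmorphV /=.
    exact: solve1 bC h1.
  exact: solve1 bC h2.
have rep : forall z, W z -> exists a b, z = vl a b u1 w2.
  move=> z Wz; case: D => _ _ _ Wr.
  have [n1 [n2 [n3 [nz [e1 e2]]]]] := Wr _ _ _ Wu1 Ww2 Wz.
  case: (eqVneq n3 0) => [n30|n3n].
    exfalso; rewrite n30 !mulr0z !addr0 in e1 e2.
    have := I12 n1%:~R n2%:~R; rewrite /vl !rmorph_int !mulrzl e1 e2.
    move=> /(_ erefl) [/eqP h1 /eqP h2]; rewrite !intr_eq0 in h1 h2.
    by move: nz; rewrite n30 (eqP h1) (eqP h2) eqxx.
  exists (- n1%:~R / n3%:~R), (- n2%:~R / n3%:~R).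
  rewrite -(mulrzl u1.1 n1) -(mulrzl w2.1 n2) -(mulrzl z.1 n3) in e1.
  rewrite -(mulrzl u1.2 n1) -(mulrzl w2.2 n2) -(mulrzl z.2 n3) in e2.
  rewrite /vl !RC_div [z]surjective_pairing; congr pair; apply: solve2; rewrite ?intr_eq0 //.
pose S2 := [set b : R | exists a, W (vl a b u1 w2)].
have S20 : S2 0 by exists 0; rewrite vl00.
have S2sub : forall a b, S2 a -> S2 b -> S2 (a - b).
  by move=> b b' [a Wa] [a' Wa']; exists (a - a'); rewrite -vl_sub; exact: Wsub.
have S21 : exists s, S2 s /\ s != 0.
  by exists 1; split; [exists 0; rewrite vl01 | exact: oner_neq0].
have nw2 := nrm_ge0 w2; have nu1 := nrm_ge0 u1.
pose N := (Num.truncn (2 * nrm u1 / e)).+1.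
have NR : 2 * nrm u1 / e < N%:R.
  have /andP [] := @truncn_itv R (2 * nrm u1 / e) (divr_ge0 (mulr_ge0 (ler0n _ 2) nu1) (ltW e0)).
  by [].
have N0 : (0 < N)%N by [].
have Np : 0 < (N%:R : R) by rewrite ltr0n.
pose d2 := e / (2 * N%:R * (nrm w2 + 1)).
have d20 : 0 < d2 by rewrite divr_gt0 // !mulr_gt0 // ltr_wpDl.
have S2d : forall b, S2 b -> 0 < b -> d2 <= b.
  move=> b [a Wab] b0; rewrite leNgt; apply/negP => bd.
  pose f k := k%:R * a - (Num.floor (k%:R * a))%:~R.
  have fr : forall k, 0 <= f k < 1.
    move=> k; have := floor_itv (k%:R * a); rewrite intrD /f => /andP [h1 h2].
    by apply/andP; split; lra.
  have [i [j [ij jN fij]]] := @pigeon R N f N0 fr.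
  pose z := vl (f j - f i) ((j%:R - i%:R) * b) u1 w2.
  have Wz : W z.
    have := W_vl _ (vl a b u1 w2) u1 (j%:Z - i%:Z)
      (Num.floor (i%:R * a) - Num.floor (j%:R * a)) G Wab Wu1.
    rewrite vl_combR; congr W; congr vl; rewrite /f !intrB -!pmulrn; ring.
  have zn : z != (0, 0).
    apply/eqP => z0; have [_] := I12 _ _ z0; apply/eqP.
    rewrite mulf_neq0 ?gt_eqF // subr_gt0 ltr_nat //.
  have : nrm z < e.
    apply: (le_lt_trans (nrm_vl _ _ _ _)).
    have h1 : `|f j - f i| * nrm u1 <= N%:R^-1 * nrm u1 by rewrite ler_wpM2r // ltW.
    have h2 : N%:R^-1 * nrm u1 < e / 2.
      rewrite ltr_pdivrMr // in NR.
      rewrite mulrC ltr_pdivrMr //; nra.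
    have ji : 0 < j%:R - i%:R :> R by rewrite subr_gt0 ltr_nat.
    have jN' : j%:R - i%:R <= N%:R :> R.
      have : (j%:R : R) <= N%:R by rewrite ler_nat.
      have : (0 : R) <= i%:R by rewrite ler0n.
      lra.
    have h3 : `|(j%:R - i%:R) * b| * nrm w2 <= N%:R * d2 * nrm w2.
      rewrite normrM !gtr0_norm //; apply: ler_wpM2r => //.
      by apply: ler_pM => //; [exact: ltW | exact: ltW | exact: ltW].
    have h4 : N%:R * d2 * nrm w2 < e / 2.
      have -> : N%:R * d2 * nrm w2 = e / 2 * (nrm w2 / (nrm w2 + 1)).
        rewrite /d2; field; apply/andP; split; rewrite gt_eqF //; lra.
      rewrite -[X in _ < X]mulr1 ltr_pM2l ?divr_gt0 //.
      by rewrite ltr_pdivrMr; lra.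
    lra.
  by move/(sep _ Wz)/eqP; rewrite (negPf zn).
have [b0 b0p Sc] := @cyc1 R S2 _ S20 S2sub d20 S2d S21.
have [a0 Wa0] : S2 b0 by apply/Sc; exists 1; rewrite mul1r.
right; exists u1, (vl a0 b0 u1 w2); split.
  move=> a b; rewrite vl_combL => /I12 [h1 /eqP h2].
  move: h2; rewrite mulf_eq0 (gt_eqF b0p) orbF => /eqP b0'.
  by move: h1; rewrite b0' mul0r addr0.
move=> z; split; last by move=> [n [m ->]]; exact: W_vl.
move=> Wz; have [a [b ez]] := rep z Wz.
have [m bm] : exists m : int, b = m%:~R * b0 by apply/Sc; exists a; rewrite -ez.
have := W_vl _ _ _ 1 (- m) G Wz Wa0.
rewrite ez vl_comb !mulr1z !mul1r intrN !mulNr bm subrr (vl_t0 _ _ w2 u1) => /Lu1 [n en].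
exists n, m; rewrite vl_combL -en; congr vl; ring.
Qed.
End Vec.

Section Mx.
Variable R : realType.
Local Notation C := R[i].
Local Notation M3 := 'M[C]_3.
Definition mk33 (a00 a01 a02 a10 a11 a12 a20 a21 a22 : C) : M3 :=
  \matrix_(i, j) nth 0 (nth [::] [:: [:: a00; a01; a02]; [:: a10; a11; a12]; [:: a20; a21; a22]] i) j.
Lemma mk33M a00 a01 a02 a10 a11 a12 a20 a21 a22 b00 b01 b02 b10 b11 b12 b20 b21 b22 :
  mk33 a00 a01 a02 a10 a11 a12 a20 a21 a22 *m mk33 b00 b01 b02 b10 b11 b12 b20 b21 b22 =
  mk33 (a00 * b00 + a01 * b10 + a02 * b20) (a00 * b01 + a01 * b11 + a02 * b21) (a00 * b02 + a01 * b12 + a02 * b22)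
       (a10 * b00 + a11 * b10 + a12 * b20) (a10 * b01 + a11 * b11 + a12 * b21) (a10 * b02 + a11 * b12 + a12 * b22)
       (a20 * b00 + a21 * b10 + a22 * b20) (a20 * b01 + a21 * b11 + a22 * b21) (a20 * b02 + a21 * b12 + a22 * b22).
Proof.
apply/matrixP => i j. rewrite !mxE. rewrite !big_ord_recl big_ord0 !mxE /=.
case: i => [[|[|[|?]]] ?] //; case: j => [[|[|[|?]]] ?] //=.
all: ring.
Qed.
Lemma gxyE (x y : C) : gxy x y = mk33 1 x y 0 1 0 0 0 1.
Proof.
apply/matrixP => i j. rewrite /gxy !mxE.
case: i => [[|[|[|?]]] ?] //; case: j => [[|[|[|?]]] ?] //=.
all: ring.
Qed.

Lemma mx1E : 1%:M = mk33 1 0 0 0 1 0 0 0 1.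
Proof.
apply/matrixP => i j; rewrite !mxE.
by case: i => [[|[|[|?]]] ?] //; case: j => [[|[|[|?]]] ?].
Qed.

Lemma mk33Z k a00 a01 a02 a10 a11 a12 a20 a21 a22 :
  k *: mk33 a00 a01 a02 a10 a11 a12 a20 a21 a22 =
  mk33 (k * a00) (k * a01) (k * a02) (k * a10) (k * a11) (k * a12) (k * a20) (k * a21) (k * a22).
Proof.
apply/matrixP => i j; rewrite !mxE.
by case: i => [[|[|[|?]]] ?] //; case: j => [[|[|[|?]]] ?].
Qed.

Lemma gxyM (x y x' y' : C) : gxy x y *m gxy x' y' = gxy (x + x') (y + y').
Proof. by rewrite !gxyE mk33M; congr mk33; ring. Qed.

Lemma gxy00 : gxy 0 0 = 1%:M :> M3.
Proof. by rewrite gxyE mx1E. Qed.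

Lemma inv_uniq (A B : M3) : A *m B = 1%:M -> invmx A = B.
Proof. by move=> h; have [uA _] := mulmx1_unit h; rewrite -[B](mulKmx uA) h mulmx1. Qed.

Lemma gxy_unit (x y : C) : gxy x y \in unitmx.
Proof. by have [] := @mulmx1_unit _ _ (gxy x y) (gxy (-x) (-y)); rewrite // gxyM !subrr gxy00. Qed.

Lemma gxyV (x y : C) : invmx (gxy x y) = gxy (-x) (-y).
Proof. by apply: inv_uniq; rewrite gxyM !subrr gxy00. Qed.

Lemma invmxMu (A B : M3) : A \in unitmx -> B \in unitmx ->
  invmx (A *m B) = invmx B *m invmx A.
Proof.
move=> uA uB; apply: inv_uniq.
by rewrite -mulmxA (mulmxA B) mulmxV // mul1mx mulmxV.
Qed.

Definition Qm (p q r s : C) : M3 := mk33 1 0 0 0 p q 0 r s.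

Lemma Qm_unit p q r s : p * s - q * r != 0 -> Qm p q r s \in unitmx.
Proof.
move=> D.
have [] := @mulmx1_unit _ _ (Qm p q r s)
  (Qm (s / (p * s - q * r)) (- q / (p * s - q * r)) (- r / (p * s - q * r)) (p / (p * s - q * r))) => //.
by rewrite /Qm mk33M mx1E; congr mk33; field.
Qed.

Lemma Qm_conj (p q r s x y : C) :
  Qm p q r s *m gxy (x * p + y * r) (x * q + y * s) = gxy x y *m Qm p q r s.
Proof. by rewrite /Qm !gxyE !mk33M; congr mk33; ring. Qed.
Lemma scale_gxy_unit (c x y : C) : c != 0 -> c *: gxy x y \in unitmx.
Proof. by move=> cn; rewrite unitmxZ ?unitfE // gxy_unit. Qed.

Lemma GammaW_grp (W : set (C * C)) : W (0, 0) ->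
  (forall u v, W u -> W v -> W (u.1 + v.1, u.2 + v.2)) ->
  (forall u, W u -> W (- u.1, - u.2)) -> psubgroup (GammaW W).
Proof.
move=> W0 Wadd Wneg; split.
- by move=> A [x [y [c [_ cn ->]]]]; exact: scale_gxy_unit.
- move=> A d [x [y [c [Wxy cn ->]]]] dn; exists x, y, (d * c); split => //.
    by rewrite mulf_neq0.
  by rewrite scalerA.
- by exists 0, 0, 1; split; rewrite ?oner_neq0 // scale1r gxy00.
- move=> A B [x [y [c [Wxy cn ->]]]] [x' [y' [c' [Wxy' cn' ->]]]].
  exists (x + x'), (y + y'), (c * c'); split.
  + exact: (Wadd (x, y) (x', y')).
  + by rewrite mulf_neq0.
  + by rewrite -scalemxAl -scalemxAr scalerA gxyM.
- move=> A [x [y [c [Wxy cn ->]]]]; exists (- x), (- y), c^-1; split.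
  + exact: (Wneg (x, y)).
  + by rewrite invr_eq0.
  + by rewrite invmxZ ?scale_gxy_unit // gxyV.
Qed.

Lemma pconj_trans (G H K : set M3) : pconj G H -> pconj H K -> pconj G K.
Proof.
move=> [P uP hP] [Q uQ hQ]; exists (Q *m P); first by rewrite unitmx_mul uQ uP.
by move=> A; rewrite hP hQ invmxMu // !mulmxA.
Qed.

Lemma pconj_ext (G H K : set M3) : pconj G H -> (forall A, H A <-> K A) -> pconj G K.
Proof. by move=> [P uP hP] hK; exists P => // A; rewrite hP hK. Qed.

Lemma conj_lin (W W' : set (C * C)) (p q r s : C) : p * s - q * r != 0 ->
  (forall z, W z <-> exists2 z', W' z' & z = (z'.1 * p + z'.2 * r, z'.1 * q + z'.2 * s)) ->
  pconj (GammaW W) (GammaW W').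
Proof.
move=> D hW; have uQ := Qm_unit _ _ _ _ D.
have key x y : Qm p q r s *m gxy (x * p + y * r) (x * q + y * s) *m invmx (Qm p q r s) = gxy x y.
  by rewrite Qm_conj mulmxK.
have key2 x y : invmx (Qm p q r s) *m gxy x y *m Qm p q r s = gxy (x * p + y * r) (x * q + y * s).
  by rewrite -mulmxA -Qm_conj mulKmx.
exists (Qm p q r s) => // A; split.
  move=> [x [y [c [Wxy cn ->]]]]; have [[x' y'] W'z /= [-> ->]] := (hW (x, y)).1 Wxy.
  by exists x', y', c; split => //; rewrite -scalemxAr -scalemxAl key.
move=> [x' [y' [c [W'z cn hA]]]].
have eA : A = c *: gxy (x' * p + y' * r) (x' * q + y' * s).
  by rewrite -key2 scalemxAl scalemxAr -hA !mulmxA mulVmx // mul1mx mulmxKV.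
exists (x' * p + y' * r), (x' * q + y' * s), c; split => //.
by apply/hW; exists (x', y').
Qed.

Definition span2 (a b : C * C) : set (C * C) :=
  fun z => exists n m : int, z = (a.1 *~ n + b.1 *~ m, a.2 *~ n + b.2 *~ m).

Lemma pgen_pow (H : set M3) (x y : C) : psubgroup H -> H (gxy x y) ->
  forall k : int, H (gxy (x *~ k) (y *~ k)).
Proof.
move=> [_ _ H1 HM HV] Hg.
have Hn : forall k : nat, H (gxy (x *+ k) (y *+ k)).
  elim=> [|k IH]; first by rewrite !mulr0n gxy00.
  by rewrite !mulrS -gxyM; exact: HM.
case=> k; first exact: Hn.
by rewrite NegzE !mulrNz -gxyV; apply: HV; exact: Hn.
Qed.

Lemma pgen2 (a b : C * C) A :
  pgen [set B | B = gxy a.1 a.2 \/ B = gxy b.1 b.2] A <-> GammaW (span2 a b) A.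
Proof.
split.
  move=> h; apply: h.
    apply: GammaW_grp.
    - by exists 0, 0; rewrite !mulr0z !addr0.
    - move=> u v [n [m ->]] [n' [m' ->]]; exists (n + n'), (m + m') => /=.
      by rewrite !mulrzDr; congr pair; rewrite addrACA.
    - move=> u [n [m ->]]; exists (- n), (- m) => /=.
      by rewrite !mulrNz !opprD.
  move=> B [->|->].
    exists a.1, a.2, 1; split; rewrite ?oner_neq0 ?scale1r //.
    by exists 1, 0; rewrite !mulr0z !addr0 !mulr1z.
  exists b.1, b.2, 1; split; rewrite ?oner_neq0 ?scale1r //.
  by exists 0, 1; rewrite !mulr0z !add0r !mulr1z.
move=> [x [y [c [[n [m [-> ->]]] cn ->]]]] H hH sub.
have [_ HZ _ HM _] := hH.
apply: HZ => //; rewrite -gxyM; apply: HM; apply: pgen_pow => //; apply: sub.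
  by left.
by right.
Qed.

Definition Up (a b c d e f : C) : M3 := mk33 a b c 0 d e 0 0 f.

Lemma Up_inj a b c d e f a' b' c' d' e' f' :
  Up a b c d e f = Up a' b' c' d' e' f' ->
  a = a' /\ b = b' /\ c = c' /\ d = d' /\ e = e' /\ f = f'.
Proof.
move=> h.
have h00 := congr1 (fun M : M3 => M 0 0) h; have h01 := congr1 (fun M : M3 => M 0 1) h.
have h02 := congr1 (fun M : M3 => M 0 2) h; have h11 := congr1 (fun M : M3 => M 1 1) h.
have h12 := congr1 (fun M : M3 => M 1 2) h; have h22 := congr1 (fun M : M3 => M 2 2) h.
by move: h00 h01 h02 h11 h12 h22; rewrite /Up !mxE /= => -> -> -> -> -> ->.
Qed.

Lemma upE (M : M3) : (forall i j : 'I_3, (j < i)%N -> M i j = 0) ->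
  M = Up (M 0 0) (M 0 1) (M 0 2) (M 1 1) (M 1 2) (M 2 2).
Proof.
move=> hM; rewrite /Up; apply/matrixP => i j; rewrite mxE.
case: i => [[|[|[|?]]] pi] //; case: j => [[|[|[|?]]] pj] //=;
  try (by apply: hM); by congr (M _ _); apply: val_inj.
Qed.

Lemma ordv (f : 'I_3 -> C) (i j : 'I_3) : val i = val j -> f i = f j.
Proof. by move=> h; congr f; apply: val_inj. Qed.

Lemma unip_core {b c e a x0 x1 x2 : C} : a != 1 ->
  x0 * 1 + (x1 * 0 + (x2 * 0 + 0)) = a * x0 ->
  x0 * b + (x1 * 1 + (x2 * 0 + 0)) = a * x1 ->
  x0 * c + (x1 * e + (x2 * 1 + 0)) = a * x2 -> [/\ x0 = 0, x1 = 0 & x2 = 0].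
Proof.
move=> a1 h0 h1 h2.
have na : 1 - a != 0 by rewrite subr_eq0 eq_sym.
have z0 : x0 = 0.
  have : (1 - a) * x0 = 0 by rewrite mulrBl mul1r -h0; ring.
  by move/eqP; rewrite mulf_eq0 (negPf na) /= => /eqP.
have z1 : x1 = 0.
  have : (1 - a) * x1 = 0 by rewrite mulrBl mul1r -h1 z0; ring.
  by move/eqP; rewrite mulf_eq0 (negPf na) /= => /eqP.
have z2 : x2 = 0.
  have : (1 - a) * x2 = 0 by rewrite mulrBl mul1r -h2 z0 z1; ring.
  by move/eqP; rewrite mulf_eq0 (negPf na) /= => /eqP.
by [].
Qed.

Lemma unip_eig (b c e a : C) (v : 'rV[C]_3) :
  v *m Up 1 b c 1 e 1 = a *: v -> v != 0 -> a = 1.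
Proof.
move=> h vn; apply/eqP; apply: contraNT vn => a1.
have h0 := congr1 (fun M : 'rV[C]_3 => M 0 0) h.
have h1 := congr1 (fun M : 'rV[C]_3 => M 0 1) h.
have h2 := congr1 (fun M : 'rV[C]_3 => M 0 2) h.
move: h0 h1 h2; rewrite /Up !mxE !big_ord_recl !big_ord0 !mxE /=.
rewrite (@ordv (v 0) ord0 0) // (@ordv (v 0) (lift ord0 ord0) 1) //.
rewrite (@ordv (v 0) (lift ord0 (lift ord0 ord0)) 2) // => h0 h1 h2.
have [z0 z1 z2] := unip_core a1 h0 h1 h2.
apply/eqP/rowP => j; rewrite mxE.
case: j => [[|[|[|?]]] pj] //.
- by rewrite (@ordv (v 0) _ 0) //.
- by rewrite (@ordv (v 0) _ 1) //.
- by rewrite (@ordv (v 0) _ 2) //.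
Qed.

Lemma unip_parabolic (b c e : C) : Up 1 b c 1 e 1 != 1%:M -> parabolic (Up 1 b c 1 e 1).
Proof.
move=> Un1; exists 1; rewrite scale1r; split.
- rewrite -det_tr det_trig.
    by rewrite !big_ord_recl big_ord0 /Up !mxE /= !mul1r.
  apply/is_trig_mxP; case=> [[|[|[|?]]] ?] //; case=> [[|[|[|?]]] ?] //= _; rewrite !mxE //.
- move=> [P uP] /(similar_diagP _ uP) dP.
  set U := Up 1 b c 1 e 1 in Un1 dP *.
  set D := P *m U *m invmx P in dP.
  have DP : D *m P = P *m U by rewrite /D mulmxKV.
  have diag1 : forall i, D i i = 1.
    move=> i; apply: (@unip_eig b c e _ ((delta_mx 0 i : 'rV[C]_3) *m P)).
      have eD : (delta_mx 0 i : 'rV[C]_3) *m D = D i i *: (delta_mx 0 i : 'rV[C]_3).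
        rewrite -rowE; apply/rowP => j; rewrite [LHS]mxE [RHS]mxE [X in _ * X]mxE eqxx /=.
        case: (eqVneq j i) => [->|nij]; first by rewrite mulr1.
        by rewrite mulr0 dP // eq_sym.
      by rewrite -mulmxA -DP mulmxA eD -scalemxAl.
    apply/eqP => h0.
    have : (delta_mx 0 i : 'rV[C]_3) = 0 :> 'rV[C]_3 by rewrite -(mulmxK uP ((delta_mx 0 i : 'rV[C]_3))) h0 mul0mx.
    by move/matrixP/(_ 0 i); rewrite !mxE !eqxx /= => /eqP; rewrite oner_eq0.
  have D1 : D = 1%:M.
    apply/matrixP => i j; rewrite [RHS]mxE.
    case: (eqVneq i j) => [<-|nij]; first by rewrite diag1.
    by rewrite dP.
  have : U = invmx P *m D *m P by rewrite /D !mulmxA mulVmx // mul1mx mulmxKV.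
  by rewrite D1 mulmx1 mulVmx // => eU; move: Un1; rewrite eU eqxx.
- by move=> a /eigenvalueP [v hv vn]; rewrite (@unip_eig b c e a v hv vn) normr1.
Qed.

Lemma scal_mul (a b : C) (M N : M3) : (a *: M) *m (b *: N) = (a * b) *: (M *m N).
Proof. by rewrite -scalemxAl -scalemxAr scalerA. Qed.

Lemma mk33_diag a00 a01 a02 a10 a11 a12 a20 a21 a22 b00 b01 b02 b10 b11 b12 b20 b21 b22 :
  mk33 a00 a01 a02 a10 a11 a12 a20 a21 a22 = mk33 b00 b01 b02 b10 b11 b12 b20 b21 b22 ->
  [/\ a00 = b00, a11 = b11 & a22 = b22].
Proof.
move=> h.
have h00 := congr1 (fun M : M3 => M 0 0) h; have h11 := congr1 (fun M : M3 => M 1 1) h.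
have h22 := congr1 (fun M : M3 => M 2 2) h.
by move: h00 h11 h22; rewrite !mxE /=.
Qed.

Lemma lift_up (G : set M3) M : in_Uplus G -> G M ->
  exists c a b d e f g, c != 0 /\ c *: M = Up a b d e f g.
Proof.
move=> GU GM; have [c [dc up]] := GU M GM.
have cn : c != 0.
  by apply/eqP => c0; move: dc; rewrite c0 scale0r det0 => /eqP; rewrite eq_sym oner_eq0.
by exists c; eexists; eexists; eexists; eexists; eexists; eexists; split => //; exact: upE.
Qed.

Lemma inv_rel (c c' : C) (M : M3) a b d e f g a' b' d' e' f' g' : M \in unitmx ->
  c *: M = Up a b d e f g -> c' *: invmx M = Up a' b' d' e' f' g' ->
  [/\ a * a' = c * c', e * e' = c * c' & g * g' = c * c'].
Proof.
move=> uM h h'.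
have : Up a b d e f g *m Up a' b' d' e' f' g' = (c * c') *: 1%:M.
  by rewrite -h -h' scal_mul mulmxV.
rewrite /Up mk33M mx1E mk33Z => /mk33_diag [h1 h2 h3].
by split; rewrite -[c * c']mulr1; [rewrite -h1 | rewrite -h2 | rewrite -h3]; ring.
Qed.

Arguments lift_up {G M}.
Arguments inv_rel {c c' M a b d e f g a' b' d' e' f' g'}.

Lemma para_exists (G : set M3) : psubgroup G -> in_Uplus G -> noncommutative G ->
  exists U, [/\ G U, parabolic U & forall k, U <> k *: 1%:M].
Proof.
move=> [Gu GZ G1 GM GV] GU [A [B [GA GB nc]]].
pose U := A *m B *m invmx A *m invmx B.
have GUU : G U by apply GM; [apply GM; [apply GM | apply GV] | apply GV].
have uA := Gu _ GA; have uB := Gu _ GB.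
have [c1 [x1 [x2 [x3 [x4 [x5 [x6 [c1n hX]]]]]]]] := lift_up GU GA.
have [c2 [y1 [y2 [y3 [y4 [y5 [y6 [c2n hY]]]]]]]] := lift_up GU GB.
have [c3 [z1 [z2 [z3 [z4 [z5 [z6 [c3n hX']]]]]]]] := lift_up GU (GV _ GA).
have [c4 [w1 [w2 [w3 [w4 [w5 [w6 [c4n hY']]]]]]]] := lift_up GU (GV _ GB).
have [rx1 rx4 rx6] := inv_rel uA hX hX'.
have [ry1 ry4 ry6] := inv_rel uB hY hY'.
have eU : U = (c1 * c2 * c3 * c4)^-1 *:
   (Up x1 x2 x3 x4 x5 x6 *m Up y1 y2 y3 y4 y5 y6 *m Up z1 z2 z3 z4 z5 z6 *m Up w1 w2 w3 w4 w5 w6).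
  rewrite -hX -hY -hX' -hY' !scal_mul scalerA mulVf ?scale1r //.
  by rewrite !mulf_neq0.
have cn : c1 * c2 * c3 * c4 != 0 by rewrite !mulf_neq0.
have low : forall i j : 'I_3, (j < i)%N -> U i j = 0.
  move=> i j; rewrite eU /Up !mk33M mk33Z.
  by case: i => [[|[|[|?]]] ?] //; case: j => [[|[|[|?]]] ?] //= _; rewrite mxE /=; ring.
have d0 : U 0 0 = 1.
  rewrite eU /Up !mk33M mk33Z mxE /=.
  transitivity ((c1 * c2 * c3 * c4)^-1 * ((x1 * z1) * (y1 * w1))); first by ring.
  by rewrite rx1 ry1 (_ : c1 * c3 * (c2 * c4) = c1 * c2 * c3 * c4) ?mulVf //; ring.
have d1 : U 1 1 = 1.
  rewrite eU /Up !mk33M mk33Z mxE /=.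
  transitivity ((c1 * c2 * c3 * c4)^-1 * ((x4 * z4) * (y4 * w4))); first by ring.
  by rewrite rx4 ry4 (_ : c1 * c3 * (c2 * c4) = c1 * c2 * c3 * c4) ?mulVf //; ring.
have d2 : U 2 2 = 1.
  rewrite eU /Up !mk33M mk33Z mxE /=.
  transitivity ((c1 * c2 * c3 * c4)^-1 * ((x6 * z6) * (y6 * w6))); first by ring.
  by rewrite rx6 ry6 (_ : c1 * c3 * (c2 * c4) = c1 * c2 * c3 * c4) ?mulVf //; ring.
have eUp := upE _ low; rewrite d0 d1 d2 in eUp.
have nsc : forall k, U <> k *: 1%:M.
  move=> k eUk; apply: nc.
  have hAB : A *m B = k *: (B *m A).
    have : U *m (B *m A) = A *m B by rewrite /U !mulmxA mulmxKV // mulmxKV.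
    by rewrite eUk -scalemxAl mul1mx => <-.
  have kn : k != 0.
    apply/eqP => k0; have : A *m B \in unitmx by rewrite unitmx_mul uA uB.
    by rewrite hAB k0 scale0r unitmxE det0 unitr0.
  by exists k.
exists U; split => //.
rewrite eUp; apply: unip_parabolic; apply/eqP => h.
by apply: (nsc 1); rewrite scale1r eUp.
Qed.
End Mx.

Arguments span2 {R}.
Arguments pgen2 {R}.
Arguments conj_lin {R W W' p q r s}.
Arguments pconj_ext {R G H K}.
Arguments pconj_trans {R G H K}.
Arguments vl {R}.

Section Final.
Variable R : realType.
Local Notation C := R[i].
Local Notation M3 := 'M[C]_3.

Lemma pgen1 (a : C * C) A :
  pgen [set B | B = gxy a.1 a.2] A <-> GammaW (span2 a a) A.
Proof.
rewrite -pgen2; suff -> : [set B | B = gxy a.1 a.2] = [set B | B = gxy a.1 a.2 \/ B = gxy a.1 a.2] by [].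
by apply/seteqP; split => B /=; [left | case].
Qed.

Lemma compl (u : C * C) : u != (0, 0) -> exists r s, u.1 * s - u.2 * r != 0.
Proof.
case: u => x y /= un; case: (eqVneq x 0) => [x0|xn].
  exists 1, 0; rewrite mulr0 mulr1 sub0r oppr_eq0; apply: contraNneq un => y0.
  by rewrite x0 y0.
by exists 0, 1; rewrite mulr1 mulr0 subr0.
Qed.

Lemma RCint (n : int) : ((n%:~R : R))%:C = n%:~R :> C.
Proof. by rewrite rmorph_int. Qed.

Lemma conj4 (W : set (C * C)) u : u != (0, 0) ->
  (forall z, W z <-> exists n : int, z = vl n%:~R 0 u u) -> pconj (GammaW W) (@Gamma4 R).
Proof.
move=> un hW; have [r [s D]] := compl _ un.
apply: (pconj_ext (conj_lin (W' := span2 (1, 0) (1, 0)) D _)) => [z|A].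
  rewrite hW; split.
    move=> [n ->]; exists (n%:~R, 0).
      by exists n, 0; rewrite /= !mulr0z !mul0rz !addr0.
    by rewrite /vl /= RCint !mul0r !addr0.
  move=> [z' [n [m ->]] ->]; exists (n + m); rewrite /vl /= RCint intrD.
  congr pair; ring.
by rewrite /Gamma4 (pgen1 (1, 0)).
Qed.

Lemma conj1 (W : set (C * C)) u v : u.1 * v.2 - u.2 * v.1 != 0 ->
  (forall z, W z <-> exists n m : int, z = vl n%:~R m%:~R u v) -> pconj (GammaW W) (@Gamma1 R).
Proof.
move=> D hW.
apply: (pconj_ext (conj_lin (W' := span2 (1, 0) (0, 1)) D _)) => [z|A].
  rewrite hW; split.
    move=> [n [m ->]]; exists (n%:~R, m%:~R).
      by exists n, m; rewrite /= !mul0rz addr0 add0r.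
    by rewrite /vl /= !RCint; congr pair; ring.
  move=> [z' [n [m ->]] ->]; exists n, m; rewrite /vl /= !RCint.
  congr pair; ring.
by rewrite /Gamma1 (pgen2 (1, 0) (0, 1)).
Qed.

Lemma conj3 (W : set (C * C)) u v x : u != (0, 0) -> v = (x * u.1, x * u.2) ->
  (forall z, W z <-> exists n m : int, z = vl n%:~R m%:~R u v) -> pconj (GammaW W) (Gamma3 x).
Proof.
move=> un ev hW; have [r [s D]] := compl _ un.
apply: (pconj_ext (conj_lin (W' := span2 (1, 0) (x, 0)) D _)) => [z|A].
  rewrite hW; split.
    move=> [n [m ->]]; exists (n%:~R + m%:~R * x, 0).
      by exists n, m; rewrite /= !mul0rz addr0 -(mulrzl x m) mulrC.
    by rewrite /vl /= !RCint ev /=; congr pair; ring.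
  move=> [z' [n [m ->]] ->]; exists n, m; rewrite /vl /= !RCint ev /=.
  congr pair; ring.
by rewrite /Gamma3 (pgen2 (1, 0) (x, 0)).
Qed.
End Final.

Arguments para_exists {R G}.
Arguments classify {R W}.
Arguments conj4 {R W u}.
Arguments conj1 {R W u v}.
Arguments conj3 {R W u v x}.

Local Close Scope complex_scope.

Theorem mainTheorem5 (R : realType) (G : set 'M[R[i]]_3) :
  complex_kleinian G -> in_Uplus G -> noncommutative G -> torsion_free G ->
  (exists W : set (R[i] * R[i]),
     discrete_subgroup_rank_le2 W /\ pconj (parabolic_subgroup G) (GammaW W)) ->
  pconj (parabolic_subgroup G) (@Gamma1 R) \/
      (exists2 y : R[i], y \notin Num.real & pconj (parabolic_subgroup G) (Gamma2 y)) \/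
      (exists2 x : R[i], x \notin Num.real & pconj (parabolic_subgroup G) (Gamma3 x)) \/
      pconj (parabolic_subgroup G) (@Gamma4 R) \/
      pconj (parabolic_subgroup G) (@Gamma5 R).
Proof.
move=> [psG _ _] GU nc _ [W [DW hc]].
have hc' := hc; case: hc' => P uP hP.
have [U [GUU pU nsU]] := para_exists psG GU nc.
have GpU : parabolic_subgroup G U by move=> H _ sub; apply: sub.
have [x [y [c [Wxy cn eU]]]] := (hP U).1 GpU.
have nz : (x, y) != (0, 0).
  apply/negP => /eqP [x0 y0]; apply: (nsU c).
  have -> : U = invmx P *m (P *m U *m invmx P) *m P by rewrite !mulmxA mulVmx // mul1mx mulmxKV.
  by rewrite eU x0 y0 gxy00 -scalemxAr -scalemxAl mulmx1 mulVmx.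
have [[u [un hW]] | [u [v [I hW]]]] := classify DW (ex_intro2 _ _ (x, y) Wxy nz).
  by right; right; right; left; apply: (pconj_trans hc (conj4 un hW)).
case: (eqVneq (u.1 * v.2 - u.2 * v.1) 0) => [D0|Dn]; last first.
  by left; apply: (pconj_trans hc (conj1 Dn hW)).
right; right; left.
have un : u != (0, 0).
  apply/eqP => u0; have := I 1 0; rewrite vl10 u0.
  by move=> /(_ erefl) [/eqP]; rewrite oner_eq0.
have [x0 ev] : exists x0, v = (x0 * u.1, x0 * u.2).
  case: (eqVneq u.1 0) => [u10|u1n].
    have u2n : u.2 != 0 by apply: contraNneq un => u20; rewrite [u]surjective_pairing u10 u20.
    exists (v.2 / u.2); rewrite [v]surjective_pairing /= u10 mulr0 divfK //; congr pair.
    by move: D0; rewrite u10 mul0r sub0r => /eqP; rewrite oppr_eq0 mulf_eq0 (negPf u2n) /= => /eqP.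
  exists (v.1 / u.1); rewrite [v]surjective_pairing /= divfK //; congr pair.
  apply: (mulfI u1n); move: D0 => /eqP; rewrite subr_eq0 => /eqP ->; field.
  exact: u1n.
exists x0; last exact: (pconj_trans hc (conj3 un ev hW)).
apply/negP => /complex_realP [t et].
have := I t (-1); rewrite /vl ev et /= => /(_ _) [].
  by congr pair; rewrite rmorphN /= rmorph1; ring.
by move=> _ /eqP; rewrite oppr_eq0 oner_eq0.
Qed.
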